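(* Let $\mathbf{d}=(d_1\ge d_2\ge\cdots\ge d_n)$ be a zero-free graphical degree sequence. Consider the following procedure applied to $\mathbf{d}$: (1) If $d_1\ge n-2$ or $d_n\ge\lfloor n/2\rfloor$, return True. (2) Otherwise, if $d_1=d_n$, return False. (3) Otherwise, let $s_u=\max\{s: s<n-d_{s+1}\}$. If there exists an integer $s$ with $d_1+1\le s\le s_u$ such that both $(d_1,\dots,d_s)$ and $(d_{s+1},\dots,d_n)$ are graphical, return False. (4) Otherwise, for each integer $l$ from $d_n+1$ to $\min\{\lfloor n/2\rfloor,\, n-d_1-1\}$: if $d_{n+1-l}<l$, let $m=\min\{i: d_i<l\}$; if moreover $l\le n-m$, then for every choice of $l$ indices from $\{m,m+1,\dots,n\}$, let $\mathbf{s_1}$ be the subsequence of $\mathbf{d}$ at these indices and $\mathbf{s_2}$ the subsequence of $\mathbf{d}$ at the remaining $n-l$ indices; if $\mathbf{s_1}$ and $\mathbf{s_2}$ both have even sum and are both graphical, return False. (5) If the procedure has not returned, return True. Then this procedure returns True if and only if $\mathbf{d}$ is forcibly connected.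
   Context: A graphical degree sequence of length $n$ is a non-increasing sequence of non-negative integers that is the vertex degree sequence of some simple graph (finite, undirected, no loops or multiple edges) on $n$ vertices; such a graph is a realization of the sequence. A finite sequence of non-negative integers is called graphical if, when sorted in non-increasing order, it is a graphical degree sequence. A sequence is zero-free if all its terms are positive. A graphical degree sequence is forcibly connected if every one of its realizations is a connected graph. *)

(* Defs.v *)
From mathcomp Require Import all_boot.
Set Implicit Arguments. Unset Strict Implicit. Unset Printing Implicit Defensive.

Definition simple_graph (n : nat) (e : rel 'I_n) : Prop :=
  (forall i j, e i j = e j i) /\ (forall i, ~~ e i i).

Definition deg (n : nat) (e : rel 'I_n) (i : 'I_n) : nat := #|[set j | e i j]|.

Definition realization (d : seq nat) (e : rel 'I_(size d)) : Prop :=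
  simple_graph e /\ forall i : 'I_(size d), deg e i = nth 0 d i.

Definition graphical_degree_seq (d : seq nat) : Prop :=
  sorted geq d /\ exists e : rel 'I_(size d), realization e.

Definition graphical (s : seq nat) : Prop := graphical_degree_seq (sort geq s).

Definition zero_free (d : seq nat) : bool := all (fun x => 0 < x) d.

Definition graph_connected (n : nat) (e : rel 'I_n) : Prop :=
  forall i j : 'I_n, connect e i j.

Definition forcibly_connected (d : seq nat) : Prop :=
  forall e : rel 'I_(size d), realization e -> graph_connected e.

(* 1-based access d_i *)
Definition D (d : seq nat) (i : nat) : nat := nth 0 d i.-1.

Definition s_u (d : seq nat) : nat :=
  \max_(s < size d | s < size d - D d s.+1) (s : nat).

Definition step1 (d : seq nat) : Prop :=
  size d - 2 <= D d 1 \/ (size d)./2 <= D d (size d).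

Definition step3 (d : seq nat) : Prop :=
  exists s, [/\ D d 1 + 1 <= s, s <= s_u d,
                graphical (take s d) & graphical (drop s d)].

(* m = min { i : d_i < l } (1-based) *)
Definition m_index (d : seq nat) (l : nat) : nat := (find (fun x => x < l) d).+1.

Definition subseq_at (d : seq nat) (I : {set 'I_(size d)}) : seq nat :=
  [seq nth 0 d (nat_of_ord i) | i <- enum I].

Definition step4 (d : seq nat) : Prop :=
  let n := size d in
  exists l, [/\ D d n + 1 <= l, l <= minn n./2 (n - D d 1 - 1),
     D d (n.+1 - l) < l,
     l <= n - m_index d l &
     exists I : {set 'I_n},
       [/\ #|I| = l,
           (forall i : 'I_n, i \in I -> m_index d l <= (i : nat).+1),
           ~~ odd (sumn (subseq_at I)) /\ ~~ odd (sumn (subseq_at (~: I))),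
           graphical (subseq_at I) & graphical (subseq_at (~: I))]].

Definition procedure_true (d : seq nat) : Prop :=
  step1 d \/ (~ step1 d /\ D d 1 <> D d (size d) /\ ~ step3 d /\ ~ step4 d).

(* Main.v *)
Require Import Defs.
From mathcomp Require Import all_boot zify.
Set Implicit Arguments. Unset Strict Implicit. Unset Printing Implicit Defensive.


Definition rin (V : finType) (A : {set V}) (f : V -> nat) : Prop :=
  exists e : rel V, [/\ (forall x y, e x y = e y x), (forall x, ~~ e x x),
     (forall x y, e x y -> x \in A) &
     (forall x, x \in A -> #|[set y | e x y]| = f x)].

Lemma rin_eq (V : finType) (A : {set V}) f g :
  (forall x, x \in A -> f x = g x) -> rin A f -> rin A g.
Proof.
move=> fg [e [h1 h2 h3 h4]]; exists e; split=> // x xA.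
by rewrite h4 // fg.
Qed.

Lemma rin_transport (W V : finType) (h : W -> V) (B : {set W}) (f : V -> nat) g :
  injective h -> (forall x, x \in B -> g x = f (h x)) ->
  (rin B g <-> rin (h @: B) f).
Proof.
move=> hinj hg; split.
- move=> [e [s1 s2 s3 s4]].
  exists (fun x y => [exists u, exists w, [&& h u == x, h w == y & e u w]]).
  split.
  + move=> x y; apply/idP/idP.
    * case/existsP=> u /existsP [w /and3P [/eqP hu /eqP hw euw]].
      by apply/existsP; exists w; apply/existsP; exists u; rewrite hu hw s1 euw !eqxx.
    * case/existsP=> u /existsP [w /and3P [/eqP hu /eqP hw euw]].
      by apply/existsP; exists w; apply/existsP; exists u; rewrite hu hw s1 euw !eqxx.
  + move=> x; apply/negP; case/existsP=> u /existsP [w /and3P [/eqP hu /eqP hw euw]].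
    by move: hw; rewrite -hu => /hinj hw; move: euw; rewrite hw (negbTE (s2 u)).
  + move=> x y; case/existsP=> u /existsP [w /and3P [/eqP hu /eqP hw euw]].
    by rewrite -hu imset_f // (s3 _ _ euw).
  + move=> x /imsetP [u uB ->].
    have -> : [set y | [exists u0, exists w, [&& h u0 == h u, h w == y & e u0 w]]]
            = h @: [set w | e u w].
      apply/setP=> y; rewrite inE; apply/idP/idP.
      * case/existsP=> u0 /existsP [w /and3P [/eqP hu /eqP hw euw]].
        move: hu => /hinj hu; subst.
        by apply/imsetP; exists w; rewrite ?inE.
      * case/imsetP=> w; rewrite inE => euw ->.
        by apply/existsP; exists u; apply/existsP; exists w; rewrite !eqxx euw.
    by rewrite card_imset // s4 // hg.
- move=> [e [s1 s2 s3 s4]].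
  exists (fun u w => e (h u) (h w)); split.
  + by move=> x y; rewrite s1.
  + by move=> x; rewrite s2.
  + by move=> x y /s3; rewrite mem_imset.
  + move=> u uB.
    set N := [set y | e (h u) y].
    have -> : [set y | e (h u) (h y)] = h @^-1: N by apply/setP=> y; rewrite !inE.
    have hN : h @: (h @^-1: N) = N.
      apply/setP=> y; apply/idP/idP.
      * by case/imsetP=> w; rewrite inE => ? ->.
      * rewrite inE => ehy.
        have : y \in h @: B by apply: (s3 y (h u)); rewrite s1.
        case/imsetP=> w _ yw; subst y.
        by apply/imsetP; exists w; rewrite ?inE.
    by rewrite -(card_imset _ hinj) hN s4 ?hg // imset_f.
Qed.

Lemma rin_bound (V : finType) (A : {set V}) f x :
  rin A f -> x \in A -> f x < #|A|.
Proof.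
move=> [e [s1 s2 s3 s4]] xA.
rewrite -(s4 _ xA) (cardsD1 x A) xA add1n ltnS.
apply: subset_leq_card; apply/subsetP=> y; rewrite !inE => exy.
rewrite (s3 y x) ?andbT; last by rewrite s1.
by apply/eqP=> yx; subst; move: exy; rewrite (negbTE (s2 x)).
Qed.

Lemma rin_union (V : finType) (A : {set V}) f :
  rin A f -> rin (~: A) f ->
  exists e : rel V, [/\ (forall x y, e x y = e y x), (forall x, ~~ e x x),
     (forall x, #|[set y | e x y]| = f x) &
     (forall x y, x \in A -> ~~ connect e y x \/ y \in A)].
Proof.
move=> [e1 [a1 a2 a3 a4]] [e2 [b1 b2 b3 b4]].
have cl : closed (fun x y => e1 x y || e2 x y) (mem A).
  move=> x y /orP [h|h].
  - by rewrite (a3 _ _ h); rewrite a1 in h; rewrite (a3 _ _ h).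
  - have := b3 _ _ h; rewrite b1 in h; have := b3 _ _ h.
    by rewrite !inE => /negbTE -> /negbTE ->.
exists (fun x y => e1 x y || e2 x y); split.
- by move=> x y; rewrite a1 b1.
- by move=> x; rewrite (negbTE (a2 x)) (negbTE (b2 x)).
- move=> x; case: (boolP (x \in A)) => xA.
  + rewrite -a4 //; apply: eq_card => y; rewrite !inE.
    case h2: (e2 x y); rewrite ?orbF //; move: (b3 _ _ h2); rewrite inE xA; done.
  + rewrite -b4 ?inE //; apply: eq_card => y; rewrite !inE.
    case h1: (e1 x y); rewrite ?orFb //=; move: (a3 _ _ h1); by rewrite (negbTE xA).
- move=> x y xA; case: (boolP (y \in A)) => yA; [by right|left].
  apply/negP=> /(closed_connect cl); by rewrite xA (negbTE yA).
Qed.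

Lemma rin_restrict (V : finType) (e : rel V) (A : {set V}) f :
  (forall x y, e x y = e y x) -> (forall x, ~~ e x x) ->
  (forall x, #|[set y | e x y]| = f x) ->
  (forall x y, e x y -> x \in A -> y \in A) -> rin A f.
Proof.
move=> s1 s2 s3 cl.
exists (fun x y => e x y && (x \in A)); split.
- move=> x y; rewrite s1; case: (boolP (e y x)) => //= eyx.
  apply/idP/idP; [apply: cl; by rewrite s1|exact: cl].
- by move=> x; rewrite (negbTE (s2 x)).
- by move=> x y /andP [].
- move=> x xA; rewrite -s3; apply: eq_card => y; by rewrite !inE xA andbT.
Qed.


Lemma handshake n (A : {set 'I_n}) f : rin A f -> ~~ odd (\sum_(x in A) f x).
Proof.
move=> [e [s1 s2 s3 s4]].
have -> : \sum_(x in A) f x = \sum_x \sum_y (e x y : nat).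
  rewrite big_mkcond; apply: eq_bigr => x _.
  rewrite -big_mkcond /= sum1dep_card.
  case: (boolP (x \in A)) => xA; first by rewrite s4.
  apply/esym/eqP; rewrite cards_eq0; apply/eqP/setP=> y; rewrite !inE.
  by apply/negP=> /s3; rewrite (negbTE xA).
have -> : \sum_x \sum_y (e x y : nat) =
          \sum_x \sum_y ((e x y && (x < y)) : nat) + \sum_x \sum_y ((e x y && (y < x)) : nat).
  rewrite -big_split; apply: eq_bigr => x _; rewrite -big_split; apply: eq_bigr => y _ /=.
  case: (boolP (e x y)) => //= exy.
  have : x != y by apply/negP => /eqP xy; subst; move: exy; rewrite (negbTE (s2 y)).
  rewrite -val_eqE /=; lia.
rewrite [X in _ + X]exchange_big /=.
have -> : \sum_y \sum_x ((e x y && (y < x)) : nat) = \sum_x \sum_y ((e x y && (x < y)) : nat).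
  by apply: eq_bigr => x _; apply: eq_bigr => y _; rewrite s1.
by rewrite addnn odd_double.
Qed.


Lemma real_rin (s : seq nat) :
  (exists e : rel 'I_(size s), realization e) <-> rin [set: 'I_(size s)] (fun i => nth 0 s i).
Proof.
split.
- move=> [e [[s1 s2] s3]]; exists e; split; [exact: s1|exact: s2|by move=> x y _; rewrite inE|].
  by move=> x _; exact: s3.
- move=> [e [s1 s2 s3 s4]]; exists e; split; first by split.
  by move=> i; rewrite /deg s4 ?inE.
Qed.

Lemma rin_perm (t u : seq nat) : perm_eq t u ->
  rin [set: 'I_(size t)] (fun i => nth 0 t i) <-> rin [set: 'I_(size u)] (fun i => nth 0 u i).
Proof.
move=> ptu.
have szE : size t = size u by apply: perm_size.
case/(perm_iotaP 0): ptu => Is pIs tE.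
have uIs : uniq Is by rewrite (perm_uniq pIs) iota_uniq.
have szI : size Is = size t by rewrite tE size_map.
have hP : forall i : 'I_(size t), nth 0 Is i < size u.
  move=> i; have : nth 0 Is i \in Is by apply: mem_nth; rewrite szI.
  by rewrite (perm_mem pIs) mem_iota.
pose h := fun i : 'I_(size t) => Ordinal (hP i).
have hinj : injective h.
  move=> i j /(congr1 val) /= /eqP; rewrite nth_uniq ?szI // => /eqP ij.
  exact: val_inj.
have himg : h @: [set: 'I_(size t)] = [set: 'I_(size u)].
  apply/eqP; rewrite eqEcard subsetT /= (card_imset _ hinj) !cardsT !card_ord szE.
  by [].
rewrite -himg; apply: rin_transport => // i _.
move: (congr1 (fun s => nth 0 s (val i)) tE) => /= ->.
by rewrite (nth_map 0) // szI.
Qed.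

Lemma G1 (t : seq nat) : graphical t <-> rin [set: 'I_(size t)] (fun i => nth 0 t i).
Proof.
rewrite /graphical /graphical_degree_seq.
have srt : sorted geq (sort geq t) by apply: sort_sorted => x y; exact: leq_total.
rewrite (rin_perm (u := sort geq t)); last by rewrite perm_sym perm_sort.
rewrite -real_rin; split; [by case|by split].
Qed.

Lemma G2 (t : seq nat) n (A : {set 'I_n}) (f : 'I_n -> nat) (h : 'I_(size t) -> 'I_n) :
  injective h -> h @: [set: 'I_(size t)] = A -> (forall k : 'I_(size t), nth 0 t k = f (h k)) ->
  (graphical t <-> rin A f).
Proof.
move=> hinj himg hf; rewrite G1 -himg; apply: rin_transport => // k _; exact: hf.
Qed.


Lemma shP n a N (H : a + N <= n) (k : 'I_N) : a + k < n.
Proof. have := ltn_ord k; lia. Qed.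

Definition sh n a N (H : a + N <= n) (k : 'I_N) : 'I_n := Ordinal (shP H k).

Lemma sh_inj n a N (H : a + N <= n) : injective (sh H).
Proof. move=> i j /(congr1 val) /= ij; apply: val_inj => /=; lia. Qed.

Lemma sh_img n a N (H : a + N <= n) :
  sh H @: [set: 'I_N] = [set i : 'I_n | a <= i < a + N].
Proof.
apply/setP=> i; rewrite inE; apply/idP/idP.
- case/imsetP=> k _ ->; rewrite /=; have := ltn_ord k; lia.
- move=> /andP [h1 h2].
  have kP : i - a < N by lia.
  apply/imsetP; exists (Ordinal kP) => //; apply: val_inj => /=; lia.
Qed.

Lemma G_drop (d : seq nat) s : s <= size d ->
  graphical (drop s d) <-> rin [set i : 'I_(size d) | s <= i] (fun i => nth 0 d i).
Proof.
move=> sn.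
have H : s + size (drop s d) <= size d by rewrite size_drop; lia.
have -> : [set i : 'I_(size d) | s <= i] = sh H @: [set: _].
  rewrite sh_img; apply/setP=> i; rewrite !inE size_drop; have := ltn_ord i; lia.
apply: (@G2 _ _ _ _ (sh H)); [exact: sh_inj|by []|move=> k].
by rewrite nth_drop.
Qed.

Lemma G_take (d : seq nat) s : s <= size d ->
  graphical (take s d) <-> rin [set i : 'I_(size d) | i < s] (fun i => nth 0 d i).
Proof.
move=> sn.
have H : 0 + size (take s d) <= size d by rewrite size_takel //.
have -> : [set i : 'I_(size d) | i < s] = sh H @: [set: _].
  rewrite sh_img; apply/setP=> i; rewrite !inE size_takel //.
apply: (@G2 _ _ _ _ (sh H)); [exact: sh_inj|by []|move=> k].
rewrite /= nth_take //; have := ltn_ord k; have := size_takel sn; lia.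
Qed.

Lemma G_sub (d : seq nat) (I : {set 'I_(size d)}) :
  graphical (subseq_at I) <-> rin I (fun i => nth 0 d i).
Proof.
have E : size (subseq_at I) = #|I| by rewrite size_map cardE.
pose h := fun k : 'I_(size (subseq_at I)) => enum_val (cast_ord E k).
have hinj : injective h.
  move=> i j /enum_val_inj /(congr1 val) /= ij; exact: val_inj.
have himg : h @: [set: _] = I.
  apply/eqP; rewrite eqEcard (card_imset _ hinj) cardsT card_ord.
  apply/andP; split; last by have := E; lia.
  apply/subsetP=> x /imsetP [k _ ->]; exact: enum_valP.
apply: (@G2 _ _ _ _ h hinj himg) => k.
rewrite /subseq_at (nth_map (h k)); last by rewrite -cardE -E.
by move: (enum_val_nth (h k) (cast_ord E k)) => /= <-.
Qed.


Lemma count_int a b N :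
  count (fun r => (a <= r) && (r < b)) (iota 0 N) = minn b N - minn a N.
Proof.
elim: N => [|N IH]; first by rewrite /= !minn0.
rewrite -addn1 iotaD count_cat IH /=; lia.
Qed.

Lemma card_ord_count N (P : pred nat) : #|[set r : 'I_N | P r]| = count P (iota 0 N).
Proof.
by rewrite -sum1dep_card -(big_mkord (fun r => P r) (fun _ => 1)) /index_iota subn0 sum1_count.
Qed.

Definition rd N (i j : nat) := if i <= j then j - i else j + N - i.
Definition Pc N k r := ((0 < r) && (r <= k./2)) || ((N - k./2 <= r) && (r < N)) || (odd k && (r.*2 == N)).

Lemma REG N k : k < N -> ~~ odd (N * k) -> rin [set: 'I_N] (fun _ => k).
Proof.
move=> kN par.
have hk := odd_double_half k.
have Npos : 0 < N by lia.
exists (fun i j : 'I_N => Pc N k (rd N i j)); split.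
- move=> i j; have := ltn_ord i; have := ltn_ord j; rewrite /Pc /rd.
  case: (odd k) => /=; case: (leqP i j) => ?; case: (leqP j i) => ?; lia.
- move=> i; rewrite /Pc /rd leqnn subnn; lia.
- by move=> x y; rewrite inE.
- move=> i _.
  have gP : forall j : 'I_N, rd N i j < N.
    move=> j; have := ltn_ord i; have := ltn_ord j; rewrite /rd; case: (leqP i j); lia.
  pose g := fun j => Ordinal (gP j).
  have ginj : injective g.
    move=> j1 j2 /(congr1 val) /=; rewrite /rd => hh; apply: val_inj => /=.
    move: hh; have := ltn_ord i; have := ltn_ord j1; have := ltn_ord j2.
    case: (leqP i j1) => ?; case: (leqP i j2) => ?; lia.
  have -> : [set j : 'I_N | Pc N k (rd N i j)] = g @^-1: [set r : 'I_N | Pc N k r].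
    by apply/setP=> j; rewrite !inE.
  rewrite card_preimset // card_ord_count.
  pose I1 := fun r => (1 <= r) && (r < k./2.+1).
  pose I2 := fun r => (N - k./2 <= r) && (r < N).
  pose I3 := fun r => odd k && ((N./2 <= r) && (r < N./2.+1)).
  have Neven : odd k -> N = N./2.*2.
    move=> ok; move: par; rewrite oddM ok andbT => /negbTE oN.
    by have := odd_double_half N; rewrite oN.
  have -> : count (Pc N k) (iota 0 N) = count (predU (predU I1 I2) I3) (iota 0 N).
    apply: eq_count => r; rewrite /Pc /I1 /I2 /I3 /=.
    case ok: (odd k) => /=; last by lia.
    have := Neven ok; lia.
  have c0 : forall (p : pred nat), (forall r, p r = false) -> count p (iota 0 N) = 0.
    by move=> p hp; apply/eqP; rewrite -leqn0 leqNgt -has_count; apply/hasP => -[r _]; rewrite hp.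
  have := count_predUI (predU I1 I2) I3 (iota 0 N).
  rewrite [count (predI _ _) _]c0; last first.
    move=> r; rewrite /I1 /I2 /I3 /=; case ok: (odd k); [have := Neven ok; lia | lia].
  have := count_predUI I1 I2 (iota 0 N).
  rewrite [count (predI _ _) _]c0; last by move=> r; rewrite /I1 /I2 /=; lia.
  rewrite /I1 /I2 !count_int.
  have -> : count I3 (iota 0 N) = odd k.
    rewrite /I3; case ok: (odd k) => /=.
    + rewrite count_int; have := Neven ok; lia.
    + by rewrite c0.
  lia.
Qed.


Definition split_ex (d : seq nat) := exists A : {set 'I_(size d)},
  [/\ 0 < #|A|, 0 < #|~: A|, rin A (fun i => nth 0 d i) & rin (~: A) (fun i => nth 0 d i)].

Lemma fc_split d : forcibly_connected d <-> ~ split_ex d.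
Proof.
split.
- move=> fc [A [h1 h2 r1 r2]].
  have [e [s1 s2 s3 s4]] := rin_union r1 r2.
  have re : realization e by split; [split|].
  have := fc e re.
  case/card_gt0P: h1 => x xA; case/card_gt0P: h2 => y yC.
  move=> /(_ y x); case: (s4 x y xA) => [/negP //|]; by rewrite inE in yC; move/negP: yC.
- move=> ns e [[s1 s2] s3] i j; apply/negPn/negP => nc; apply: ns.
  pose A := [set z | connect e i z].
  have cl : forall x y, e x y -> x \in A -> y \in A.
    move=> x y exy; rewrite !inE => cx; apply: connect_trans cx _; exact: connect1.
  have clC : forall x y, e x y -> x \in ~: A -> y \in ~: A.
    move=> x y exy; rewrite !inE => cx; apply/negP => cy; move/negP: cx; apply.
    apply: connect_trans cy _; apply: connect1; by rewrite s1.
  exists A; split.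
  + by apply/card_gt0P; exists i; rewrite inE connect0.
  + by apply/card_gt0P; exists j; rewrite !inE.
  + exact: rin_restrict s1 s2 s3 cl.
  + exact: rin_restrict s1 s2 s3 clC.
Qed.

Lemma mono d : sorted geq d -> forall i j, i <= j -> j < size d -> nth 0 d j <= nth 0 d i.
Proof.
move=> srt i j ij jn.
have tr : transitive geq by move=> x y z h1 h2; apply: leq_trans h2 h1.
have := sorted_leq_nth tr (fun x => leqnn x) 0 srt; move=> /(_ i j).
rewrite !inE; apply=> //; exact: leq_ltn_trans ij jn.
Qed.

Lemma card_ge n a : a <= n -> #|[set i : 'I_n | a <= i]| = n - a.
Proof.
move=> an; have H : a + (n - a) <= n by lia.
have -> : [set i : 'I_n | a <= i] = sh H @: [set: _].
  rewrite sh_img; apply/setP=> i; rewrite !inE; have := ltn_ord i; lia.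
by rewrite (card_imset _ (@sh_inj _ _ _ H)) cardsT card_ord.
Qed.

Lemma sum_sub (d : seq nat) (I : {set 'I_(size d)}) :
  sumn (subseq_at I) = \sum_(i in I) nth 0 d i.
Proof. by rewrite sumnE /subseq_at big_map big_enum. Qed.

Lemma s_u_bound d : s_u d <= (size d).-1.
Proof. apply/bigmax_leqP => i _; have := ltn_ord i; lia. Qed.

Lemma split_nec d : step3 d \/ step4 d -> split_ex d.
Proof.
set n := size d.
case.
- case=> s [h1 h2 g1 g2].
  have := s_u_bound d; rewrite -/n => hsu.
  have sn : s <= size d by rewrite -/n; lia.
  exists [set i : 'I_n | s <= i].
  have -> : ~: [set i : 'I_n | s <= i] = [set i : 'I_n | i < s].
    by apply/setP=> i; rewrite !inE; lia.
  split.
  + have lP : n.-1 < n by lia.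
    by apply/card_gt0P; exists (Ordinal lP); rewrite inE /=; lia.
  + have lP : 0 < n by lia.
    by apply/card_gt0P; exists (Ordinal lP); rewrite inE /=; lia.
  + by apply/G_drop.
  + by apply/G_take.
- case=> l [h1 h2 h3 h4 [I [c1 c2 [e1 e2] g1 g2]]].
  exists I; split.
  + rewrite c1; lia.
  + have := cardsC I; rewrite card_ord c1 -/n; lia.
  + by apply/G_sub.
  + by apply/G_sub.
Qed.


Lemma split_core d (B : {set 'I_(size d)}) :
  sorted geq d -> zero_free d ->
  0 < #|B| -> 0 < #|~: B| -> rin B (fun i => nth 0 d i) -> rin (~: B) (fun i => nth 0 d i) ->
  #|B|.*2 <= size d ->
  ~ step1 d /\ (step3 d \/ step4 d).
Proof.
move=> srt zf hB hC rB rC h2.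
set f := fun i : 'I_(size d) => nth 0 d i.
have zf' : forall i : 'I_(size d), 0 < f i.
  by move=> i; apply: (all_nthP 0 zf i (ltn_ord i)).
have mn : forall i j : 'I_(size d), i <= j -> f j <= f i.
  by move=> i j ij; apply: mono.
have cBC : #|B| + #|~: B| = (size d) by rewrite cardsC card_ord.
case/card_gt0P: hB => z zB.
case/card_gt0P: hC => z' zC.
have n0 : 0 < (size d) by have := ltn_ord z; lia.
pose o := Ordinal n0.
have lP : (size d).-1 < (size d) by lia.
pose la := Ordinal lP.
have bB : forall x, x \in B -> f x < #|B| by move=> x; apply: rin_bound.
have bC : forall x, x \in ~: B -> f x < #|~: B| by move=> x; apply: rin_bound.
have D1 : D d 1 = f o by [].
have Dn : D d (size d) = f la by [].
have fo : f o + 1 <= (size d) - #|B|.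
  case: (boolP (o \in B)) => oB.
  - have := bB _ oB; lia.
  - have oC : o \in ~: B by rewrite inE.
    have := bC _ oC; lia.
have flz : f la <= f z by apply: mn; rewrite /=; have := ltn_ord z; lia.
split.
  rewrite /step1 D1 Dn ; case.
  - have := zf' z'; have := bC _ zC; have := zf' z; have := bB _ zB; lia.
  - rewrite -geq_half_double in h2; have := bB _ zB; lia.
set l := #|B|.
set fi := find (fun x => x < l) d.
have hz : forall x : 'I_(size d), x \in B -> fi <= x.
  move=> x xB; rewrite leqNgt; apply/negP => /(before_find 0).
  by have := bB _ xB; rewrite /f /= => ->.
have fin : fi < (size d) by have := hz _ zB; have := ltn_ord z; lia.
have nfi : nth 0 d fi < l.
  by apply: (@nth_find _ 0 (fun x => x < l)); rewrite has_find.
have lfi : l <= (size d) - fi.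
  rewrite -(card_ge (ltnW fin)); apply: subset_leq_card; apply/subsetP => x xB.
  by rewrite inE hz.
have fiP : fi < (size d) by [].
case: (ltnP l ((size d) - fi)) => hl.
- right; exists l; split.
  + rewrite Dn; have := bB _ zB; lia.
  + rewrite D1 leq_min; apply/andP; split; first by rewrite geq_half_double.
    lia.
  + rewrite /D.
    have -> : ((size d).+1 - l).-1 = (size d) - l by lia.
    have hP : (size d) - l < (size d) by have := card_gt0P _; lia.
    have := mn (Ordinal fiP) (Ordinal hP); rewrite /f /= => h; have := h ltac:(lia); lia.
  + rewrite /m_index -/fi; lia.
  + exists B; split; first by [].
    * move=> i iB; rewrite /m_index -/fi; have := hz _ iB; lia.
    * by split; rewrite sum_sub; apply: handshake.
    * by apply/G_sub.
    * by apply/G_sub.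
- have lE : l = (size d) - fi by lia.
  have BE : B = [set i : 'I_(size d) | fi <= i].
    apply/eqP; rewrite eqEcard (card_ge (ltnW fin)) -/l lE leqnn andbT.
    by apply/subsetP => x xB; rewrite inE hz.
  left; exists fi; split.
  + rewrite D1; lia.
  + apply: (@leq_bigmax_cond _ _ _ (Ordinal fiP)); rewrite /D /=; lia.
  + apply/G_take; first by lia.
    have -> : [set i : 'I_(size d) | i < fi] = ~: B by rewrite BE; apply/setP=> i; rewrite !inE; lia.
    exact: rC.
  + by apply/G_drop; [lia| rewrite -BE].
Qed.

From Stdlib Require Import Classical.

Lemma split_suff d : sorted geq d -> zero_free d -> split_ex d ->
  ~ step1 d /\ (step3 d \/ step4 d).
Proof.
move=> srt zf [A [h1 h2 r1 r2]].
have cA : #|A| + #|~: A| = size d by rewrite cardsC card_ord.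
case: (leqP (#|A|.*2) (size d)) => hA.
- exact: (@split_core d A srt zf h1 h2 r1 r2 hA).
- apply: (@split_core d (~: A)) => //; rewrite ?setCK //; lia.
Qed.

Lemma regular d : graphical_degree_seq d -> ~ step1 d -> D d 1 = D d (size d) -> split_ex d.
Proof.
move=> [srt [e0 re0]] ns1 eqD.
have n0 : 0 < size d.
  case: (posnP (size d)) => // h; exfalso; apply: ns1; left; rewrite h.
  by [].
set k := nth 0 d 0.
have lP : (size d).-1 < size d by lia.
have allk : forall i : 'I_(size d), nth 0 d i = k.
  move=> i; apply/eqP; rewrite eqn_leq; apply/andP; split.
  - by apply: mono => //.
  - have hi : (i : nat) <= (size d).-1 by have := ltn_ord i; lia.
    have := mono srt hi lP.
    by move: eqD; rewrite /D /= -/k => <-.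
have ks : k < size d - 2 /\ k.*2.+2 <= size d.
  split; first by rewrite ltnNge; apply/negP => h; apply: ns1; left.
  have : ~ ((size d)./2 <= k).
    move=> h; apply: ns1; right; move: eqD; rewrite /D /= -/k => <-; exact: h.
  move/negP; lia.
case: ks => ks1 ks2.
have par : ~~ odd (size d * k).
  have := handshake (proj1 (real_rin d) (ex_intro _ e0 re0)).
  rewrite (eq_bigr (fun _ => k)) ?sum_nat_const ?cardsT ?card_ord //.
have H1 : 0 + k.+1 <= size d by lia.
have H2 : k.+1 + (size d - k.+1) <= size d by lia.
have R1 : rin [set: 'I_k.+1] (fun _ => k).
  apply: REG => //; by rewrite oddM oddS; case: (odd k); rewrite ?andbF.
have R2 : rin [set: 'I_(size d - k.+1)] (fun _ => k).
  apply: REG; first by lia.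
  move: par; rewrite !oddM oddB; last by lia.
  by rewrite oddS; case: (odd k); case: (odd (size d)).
move: R1 => /(@rin_transport _ _ (sh H1) _ (fun i => nth 0 d i)) R1.
move: R2 => /(@rin_transport _ _ (sh H2) _ (fun i => nth 0 d i)) R2.
have {}R1 := R1 (@sh_inj _ _ _ H1) (fun x _ => esym (allk _)).
have {}R2 := R2 (@sh_inj _ _ _ H2) (fun x _ => esym (allk _)).
rewrite sh_img in R1; rewrite sh_img in R2.
exists [set i : 'I_(size d) | 0 <= i < 0 + k.+1].
have -> : ~: [set i : 'I_(size d) | 0 <= i < 0 + k.+1] =
          [set i : 'I_(size d) | k.+1 <= i < k.+1 + (size d - k.+1)].
  by apply/setP=> i; rewrite !inE; have := ltn_ord i; lia.
split => //.
- by apply/card_gt0P; exists (Ordinal n0); rewrite inE /=.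
- by apply/card_gt0P; exists (Ordinal lP); rewrite inE /=; lia.
Qed.

Theorem mainTheorem1 (d : seq nat) :
  graphical_degree_seq d -> zero_free d ->
  (procedure_true d <-> forcibly_connected d).
Proof.
move=> gd zf; have srt := proj1 gd.
rewrite fc_split; split.
- move=> pt sp; have [ns1 s34] := split_suff srt zf sp.
  case: pt => [//|[_ [_ [n3 n4]]]]; by case: s34.
- move=> ns.
  case: (classic (step1 d)) => s1; [by left|right].
  split => //; split; [|split].
  + by move=> eqD; apply: ns; apply: regular.
  + by move=> s3; apply: ns; apply: split_nec; left.
  + by move=> s4; apply: ns; apply: split_nec; right.
Qed.
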